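(* Let $\mu_0$ be the ideal expectation of a bounded observable; single shots at noise $\epsilon\ge0$ have mean $\mu(\epsilon)$ and variance $v(\epsilon)$. Fix a Richardson rule of order $k\ge1$: scale factors $1=\lambda_0<\cdots<\lambda_k$, coefficients $c_j$ with $\sum_jc_j=1$, $\sum_jc_j\lambda_j^m=0$ ($m=1,\ldots,k$), allocation fractions $\pi_j>0$, $\sum_j\pi_j=1$. With total budget $B$, the unmitigated estimator uses $B$ shots at noise $\epsilon$; the ZNE estimator is $\sum_jc_j\widehat\mu(\lambda_j\epsilon)$ with $\widehat\mu(\lambda_j\epsilon)$ the mean of $\pi_jB$ shots at noise $\lambda_j\epsilon$, samples at distinct scales independent. Assume: (A1$(k)$) uniformly over $j$, $\mu(\lambda_j\epsilon)=\mu_0+\sum_{m=1}^ka_m\lambda_j^m\epsilon^m+O(\epsilon^{k+1})$ with $a_1=\alpha\ne0$; (A4) uniformly over the scaled noise levels, $v(\epsilon)=\nu\epsilon^q+O(\epsilon^{q+\delta_v})$ with $\nu>0$, $\delta_v>0$; (A5) the MSE difference $\Delta_{\mathrm{MSE}}(\epsilon,B)=\mathrm{MSE}_{\mathrm{noisy}}-\mathrm{MSE}_{\mathrm{ZNE}}$ satisfies \[ \Delta_{\mathrm{MSE}}(\epsilon,B)=\alpha^2\epsilon^2-\frac{K_{q,k}\epsilon^q}{B}+R(\epsilon,B),\qquad R=O(\epsilon^{2+\delta_b})+O(\epsilon^{q+\delta_v}/B), \] for some $\delta_b>0$, with differentiable power-law remainder whose rescaled version $B^{2/(2-q)}R(xB^{-1/(2-q)},B)$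 and its $x$-derivative tend to $0$ uniformly on compact subsets of $(0,\infty)$ when $q<2$, where $K_{q,k}=\nu[\sum_j c_j^2\lambda_j^q/\pi_j-1]$. Then $K_{q,k}>0$, and: if $0\le q<2$, the lower local perturbative crossing of $\Delta_{\mathrm{MSE}}(\cdot,B)$ satisfies \[ \epsilon^*(B)\sim C_{q,k}B^{-1/(2-q)},\qquad C_{q,k}=\left(\frac{K_{q,k}}{\alpha^2}\right)^{1/(2-q)}; \] if $q=2$, the local sign of $\Delta_{\mathrm{MSE}}$ for small $\epsilon>0$ is governed by the budget threshold $B^*=K_{2,k}/\alpha^2$ (ZNE helps for all small $\epsilon$ if $B>B^*$, harms if $B<B^*$); if $q>2$, the leading variance penalty is too small near zero to create a shrinking lower boundary (for each large fixed $B$, $\Delta_{\mathrm{MSE}}>0$ for all sufficiently small $\epsilon>0$, absent sign changes from higher-order terms).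
   Context: $\mathrm{MSE}(\widehat\mu)=\mathbb E[(\widehat\mu-\mu_0)^2]$. The lower local perturbative crossing is the first positive zero of $\Delta_{\mathrm{MSE}}(\cdot,B)$, in a window of the form $\{xB^{-1/(2-q)}:x\in[m,M]\}$ with $0<m<C_{q,k}<M$, across which $\Delta_{\mathrm{MSE}}$ changes from negative (ZNE harms) to positive (ZNE helps); $\epsilon^*(B)\sim g(B)$ means the ratio tends to $1$ as $B\to\infty$. *)

(* Defs.v *)
From HB Require Import structures.
From mathcomp Require Import all_boot all_order all_algebra.
From mathcomp Require Import all_classical all_reals all_analysis.
Set Implicit Arguments. Unset Strict Implicit. Unset Printing Implicit Defensive.
Import Order.TTheory GRing.Theory Num.Theory.
Import numFieldNormedType.Exports.
Local Open Scope ring_scope.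

Section ZNE.
Variable R : realType.

Definition is_richardson_rule (k : nat) (lam c pi : nat -> R) : Prop :=
  [/\ (1 <= k)%N,
      lam 0%N = 1,
      (forall j, (j < k)%N -> lam j < lam j.+1),
      \sum_(j < k.+1) c j = 1
    & (forall m, (1 <= m <= k)%N -> \sum_(j < k.+1) c j * lam j ^+ m = 0)] /\
  ((forall j, (j <= k)%N -> 0 < pi j) /\ \sum_(j < k.+1) pi j = 1).

(* MSE of the unmitigated estimator (mean of B i.i.d. shots at noise eps,
   each with mean mu eps and variance v eps), relative to the ideal value mu0:
   E[(hat mu - mu0)^2] = bias^2 + variance. *)
Definition mse_noisy (mu v : R -> R) (mu0 B eps : R) : R :=
  (mu eps - mu0) ^+ 2 + v eps / B.

(* MSE of the ZNE estimator sum_j c_j hat mu(lam_j eps), where hat mu(lam_j eps)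
   is the mean of pi_j B i.i.d. shots at noise lam_j eps, samples at distinct
   scales independent: bias^2 + sum_j c_j^2 v(lam_j eps) / (pi_j B). *)
Definition mse_zne (k : nat) (lam c pi : nat -> R) (mu v : R -> R)
  (mu0 B eps : R) : R :=
  (\sum_(j < k.+1) c j * mu (lam j * eps) - mu0) ^+ 2
  + \sum_(j < k.+1) c j ^+ 2 * v (lam j * eps) / (pi j * B).

Definition delta_mse (k : nat) (lam c pi : nat -> R) (mu v : R -> R)
  (mu0 eps B : R) : R :=
  mse_noisy mu v mu0 B eps - mse_zne k lam c pi mu v mu0 B eps.

Definition K_qk (k : nat) (lam c pi : nat -> R) (nu q : R) : R :=
  nu * (\sum_(j < k.+1) c j ^+ 2 * lam j `^ q / pi j - 1).

Definition delta_remainder (k : nat) (lam c pi : nat -> R) (mu v : R -> R)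
  (mu0 alpha nu q eps B : R) : R :=
  delta_mse k lam c pi mu v mu0 eps B
  - (alpha ^+ 2 * eps ^+ 2 - K_qk k lam c pi nu q * eps `^ q / B).

(* e is the lower local perturbative crossing of D(., B) in the window
   { x B^{-1/(2-q)} : x in [m, M] }: a zero of D(., B) in the window, with
   D(., B) < 0 on the part of the window to its left (so it is the first zero
   in the window) and D(., B) > 0 on the part to its right. *)
Definition is_lower_crossing (D : R -> R -> R) (q m M B e : R) : Prop :=
  let lo := m * B `^ (- (2 - q)^-1) in
  let hi := M * B `^ (- (2 - q)^-1) in
  [/\ lo <= e <= hi,
      D e B = 0,
      (forall x, lo <= x < e -> D x B < 0)
    & (forall x, e < x <= hi -> 0 < D x B)].

End ZNE.

(* Main.v *)
Require Import Defs.
From HB Require Import structures.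
From mathcomp Require Import all_boot all_order all_algebra.
From mathcomp Require Import all_classical all_reals all_analysis.
Import Order.TTheory GRing.Theory Num.Theory.
Import numFieldNormedType.Exports.
Local Open Scope ring_scope.
Local Open Scope classical_set_scope.

From mathcomp Require Import ring lra.

Lemma K_pos (R : realType) (k : nat) (lam c pi : nat -> R) (nu q : R) :
  is_richardson_rule k lam c pi -> 0 < nu -> 0 <= q -> 0 < K_qk k lam c pi nu q.
Proof.
move=> [[k1 l0 linc sc sm] [pip spi]] nu0 q0.
have lam1 : forall j, (j <= k)%N -> 1 <= lam j.
  elim=> [|j IH] jk; first by rewrite l0.
  by apply: le_trans (IH (ltnW jk)) (ltW (linc _ jk)).
rewrite /K_qk; apply: mulr_gt0 => //; rewrite subr_gt0.
have H1 : \sum_(j < k.+1) c j ^+ 2 / pi j <= \sum_(j < k.+1) c j ^+ 2 * lam j `^ q / pi j.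
  apply: ler_sum => j _.
  have pj : 0 < pi j by apply: pip; rewrite -ltnS.
  rewrite [X in _ <= X]mulrAC; apply: ler_peMr; first by rewrite divr_ge0 ?sqr_ge0 ?ltW.
  by rewrite -(powRr0 (lam j)) ler_powR // lam1 // -ltnS.
apply: lt_le_trans H1.
have E : \sum_(j < k.+1) c j ^+ 2 / pi j - 1 = \sum_(j < k.+1) (c j - pi j) ^+ 2 / pi j.
  transitivity (\sum_(j < k.+1) (c j ^+ 2 / pi j - 2 * c j + pi j)).
    rewrite !big_split /= sumrN -big_distrr /= sc spi; lra.
  apply: eq_bigr => j _.
  have pj : 0 < pi j by apply: pip; rewrite -ltnS.
  by field; rewrite gt_eqF.
rewrite -subr_gt0 E lt0r; apply/andP; split; last first.
  apply: sumr_ge0 => j _; apply: divr_ge0; rewrite ?sqr_ge0 // ltW // pip // -ltnS; exact: ltn_ord.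
apply/eqP => /psumr_eq0P H.
have {}H : forall i : 'I_k.+1, (c i - pi i) ^+ 2 / pi i = 0.
  move=> i; apply: H => // j _; apply: divr_ge0; rewrite ?sqr_ge0 // ltW // pip // -ltnS; exact: ltn_ord.
have ceq : forall j : 'I_k.+1, c j = pi j.
  move=> j; have pj : 0 < pi j by apply: pip; rewrite -ltnS.
  have /eqP := H j.
  by rewrite mulf_eq0 invr_eq0 (gt_eqF pj) orbF sqrf_eq0 subr_eq0 => /eqP.
have := sm 1%N; rewrite k1 => /(_ isT).
under eq_bigr => j _ do rewrite ceq expr1.
rewrite big_ord_recl /= => /eqP; rewrite gt_eqF //.
apply: ltr_pwDl.
  apply: mulr_gt0; first exact: pip.
  by apply: lt_le_trans (lam1 _ _); rewrite ?ltr01.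
apply: sumr_ge0 => j _; apply: mulr_ge0; first by apply: ltW; apply: pip; rewrite -ltnS; exact: ltn_ord.
by apply: le_trans (lam1 _ _); rewrite ?ler01 // /bump /= add1n ltn_ord.
Qed.

Lemma powR_split2 (R : realType) (e r : R) : 0 < e -> e `^ r = e ^+ 2 * e `^ (r - 2).
Proof.
move=> e0; rewrite -(powR_mulrn 2 (ltW e0)) -powRD; last by rewrite (gt_eqF e0) implybT.
by rewrite addrC subrK.
Qed.

Lemma D_bound (R : realType) (k : nat) (lam c pi : nat -> R) (mu v : R -> R) (mu0 alpha nu q dv db Cr e B : R) :
 0 < e -> 0 < B ->
 `|delta_remainder k lam c pi mu v mu0 alpha nu q e B| <= Cr * (e `^ (2 + db) + e `^ (q + dv) / B) ->
 `|delta_mse k lam c pi mu v mu0 e B - e ^+ 2 * (alpha ^+ 2 - K_qk k lam c pi nu q * e `^ (q - 2) / B)|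
   <= (`|Cr| + 1) * (e ^+ 2 * (e `^ db + e `^ (q - 2 + dv) / B)).
Proof.
move=> e0 B0 H.
have -> : delta_mse k lam c pi mu v mu0 e B - e ^+ 2 * (alpha ^+ 2 - K_qk k lam c pi nu q * e `^ (q - 2) / B)
  = delta_remainder k lam c pi mu v mu0 alpha nu q e B.
  rewrite /delta_remainder (@powR_split2 R e q e0); ring.
apply: (le_trans H).
rewrite (@powR_split2 R e (2 + db) e0) (@powR_split2 R e (q + dv) e0).
have -> : 2 + db - 2 = db by ring.
have -> : q + dv - 2 = q - 2 + dv by ring.
have X0 : 0 <= e ^+ 2 * e `^ db + e ^+ 2 * e `^ (q - 2 + dv) / B.
  apply: addr_ge0; first exact: mulr_ge0 (sqr_ge0 e) (powR_ge0 _ _).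
  exact: divr_ge0 (mulr_ge0 (sqr_ge0 e) (powR_ge0 _ _)) (ltW B0).
apply: (le_trans (ler_wpM2r X0 (ler_norm Cr))) => /=.
set P := e `^ db; set Q := e `^ (q - 2 + dv).
have -> : (`|Cr| + 1) * (e ^+ 2 * (P + Q / B)) = `|Cr| * (e ^+ 2 * P + e ^+ 2 * Q / B) + (e ^+ 2 * P + e ^+ 2 * Q / B) by ring.
by rewrite lerDl.
Qed.

Lemma small_pow (R : realType) (p t : R) : 0 < p -> 0 < t ->
  exists e0, 0 < e0 /\ forall e, 0 < e < e0 -> e `^ p < t.
Proof.
move=> p0 t0; exists (t `^ p^-1); split; first exact: powR_gt0.
move=> e /andP[e0 ee].
have := gt0_ltr_powR p0 _ _ ee.
rewrite -powRrM mulVf ?gt_eqF // powRr1 ?ltW //; apply; rewrite nnegrE ?ltW // ?powR_ge0.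
exact: powR_gt0.
Qed.

Lemma small_pow2 (R : realType) (p1 p2 c1 c2 t : R) : 0 < p1 -> 0 < p2 -> 0 <= c1 -> 0 <= c2 -> 0 < t ->
  exists e0, 0 < e0 /\ forall e, 0 < e < e0 -> c1 * e `^ p1 + c2 * e `^ p2 < t.
Proof.
move=> p10 p20 c10 c20 t0.
have [e1 [e10 H1]] := @small_pow R p1 (t / 2 / (c1 + 1)) p10 (divr_gt0 (divr_gt0 t0 (ltr0Sn _ 1)) (ltr_wpDl c10 ltr01)).
have [e2 [e20 H2]] := @small_pow R p2 (t / 2 / (c2 + 1)) p20 (divr_gt0 (divr_gt0 t0 (ltr0Sn _ 1)) (ltr_wpDl c20 ltr01)).
exists (Num.min e1 e2); split; first by rewrite lt_min e10 e20.
move=> e /andP[e0]; rewrite lt_min => /andP[ee1 ee2].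
have := H1 e; rewrite e0 ee1 => /(_ isT); rewrite ltr_pdivlMr ?(ltr_wpDl c10 ltr01) // => h1.
have := H2 e; rewrite e0 ee2 => /(_ isT); rewrite ltr_pdivlMr ?(ltr_wpDl c20 ltr01) // => h2.
have g1 := powR_ge0 e p1; have g2 := powR_ge0 e p2.
nra.
Qed.

Lemma part_q2 (R : realType) (k : nat) (lam c pi : nat -> R) (mu v : R -> R) (mu0 alpha nu q delta_v : R) :
  0 < delta_v -> alpha != 0 -> 0 < K_qk k lam c pi nu q ->
  (exists delta_b : R, 0 < delta_b /\
     exists (C e0 : R), 0 < e0 /\
       forall e B, 0 < e < e0 -> 0 < B ->
         `|delta_remainder k lam c pi mu v mu0 alpha nu q e B|
           <= C * (e `^ (2 + delta_b) + e `^ (q + delta_v) / B)) ->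
  let K := K_qk k lam c pi nu q in
  let D := delta_mse k lam c pi mu v mu0 in
  (q = 2 ->
     let Bstar := K / alpha ^+ 2 in
     forall B, 0 < B ->
       (Bstar < B -> exists e0, 0 < e0 /\ forall e, 0 < e < e0 -> 0 < D e B)
       /\
       (B < Bstar -> exists e0, 0 < e0 /\ forall e, 0 < e < e0 -> D e B < 0))
  /\
  (2 < q ->
     \forall B \near +oo, exists e0, 0 < e0 /\ forall e, 0 < e < e0 -> 0 < D e B).
Proof.
move=> dv0 a0 K0 [db [db0 [Cr [eA [eA0 HA]]]]] K D.
have a20 : 0 < alpha ^+ 2 by rewrite exprn_even_gt0.
set Cp := `|Cr| + 1.
have Cp0 : 0 < Cp by rewrite /Cp ltr_wpDl.
have Hb : forall e B, 0 < e < eA -> 0 < B ->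
  `|D e B - e ^+ 2 * (alpha ^+ 2 - K * e `^ (q - 2) / B)|
   <= e ^+ 2 * (Cp * e `^ db + Cp / B * e `^ (q - 2 + delta_v)).
  move=> e B /andP[e0 eeA] B0.
  have := @D_bound R k lam c pi mu v mu0 alpha nu q delta_v db Cr e B e0 B0.
  have hh : 0 < e < eA by rewrite e0 eeA.
  move=> /(_ (HA e B hh B0)).
  rewrite /D /K -/Cp.
  have -> : Cp * (e ^+ 2 * (e `^ db + e `^ (q - 2 + delta_v) / B)) =
     e ^+ 2 * (Cp * e `^ db + Cp / B * e `^ (q - 2 + delta_v)) by ring.
  by [].
split.
- move=> q2 Bstar B B0; rewrite q2 subrr in Hb.
  split => [BsB|BBs].
  + have t0 : 0 < alpha ^+ 2 - K / B.
      by rewrite subr_gt0 ltr_pdivrMr // mulrC -ltr_pdivrMr.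
    have [e1 [e10 H1]] := @small_pow2 R db delta_v Cp (Cp / B) _ db0 dv0 (ltW Cp0) (ltW (divr_gt0 Cp0 B0)) t0.
    exists (Num.min eA e1); split; first by rewrite lt_min eA0 e10.
    move=> e /andP[e0]; rewrite lt_min => /andP[e1A e11].
    have := Hb e B; rewrite e0 e1A => /(_ isT B0); rewrite powRr0 mulr1 add0r ler_norml => /andP[h1 h2].
    have := H1 e; rewrite e0 e11 => /(_ isT) => h3.
    have e20 : 0 < e ^+ 2 by exact: exprn_gt0.
    have : 0 < e ^+ 2 * (alpha ^+ 2 - K / B) - e ^+ 2 * (Cp * e `^ db + Cp / B * e `^ delta_v).
      by rewrite -mulrBr mulr_gt0 // subr_gt0.
    move=> h4; lra.
  + have t0 : 0 < K / B - alpha ^+ 2.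
      by rewrite subr_gt0 ltr_pdivlMr // mulrC -ltr_pdivlMr.
    have [e1 [e10 H1]] := @small_pow2 R db delta_v Cp (Cp / B) _ db0 dv0 (ltW Cp0) (ltW (divr_gt0 Cp0 B0)) t0.
    exists (Num.min eA e1); split; first by rewrite lt_min eA0 e10.
    move=> e /andP[e0]; rewrite lt_min => /andP[e1A e11].
    have := Hb e B; rewrite e0 e1A => /(_ isT B0); rewrite powRr0 mulr1 add0r ler_norml => /andP[h1 h2].
    have := H1 e; rewrite e0 e11 => /(_ isT) => h3.
    have e20 : 0 < e ^+ 2 by exact: exprn_gt0.
    have : 0 < e ^+ 2 * (K / B - alpha ^+ 2) - e ^+ 2 * (Cp * e `^ db + Cp / B * e `^ delta_v).
      by rewrite -mulrBr mulr_gt0 // subr_gt0.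
    move=> h4; lra.
- move=> q2; near=> B.
  have B0 : 0 < B by near: B; apply: nbhs_pinfty_gt; rewrite num_real.
  have q20 : 0 < q - 2 by rewrite subr_gt0.
  have [e1 [e10 H1]] := @small_pow2 R db (q - 2 + delta_v) Cp (Cp / B) _ db0
     (addr_gt0 q20 dv0) (ltW Cp0) (ltW (divr_gt0 Cp0 B0)) (divr_gt0 a20 (ltr0Sn _ 1)).
  have [e2 [e20 H2]] := @small_pow R (q - 2) (alpha ^+ 2 / 2 * B / K) q20
     (divr_gt0 (mulr_gt0 (divr_gt0 a20 (ltr0Sn _ 1)) B0) K0).
  exists (Num.min eA (Num.min e1 e2)); split; first by rewrite !lt_min eA0 e10 e20.
  move=> e /andP[e0]; rewrite !lt_min => /andP[e1A /andP[e11 e22]].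
  have := Hb e B; rewrite e0 e1A => /(_ isT B0); rewrite ler_norml => /andP[h1 h2].
  have := H1 e; rewrite e0 e11 => /(_ isT) => h3.
  have := H2 e; rewrite e0 e22 => /(_ isT) => h4.
  have h5 : K * e `^ (q - 2) / B < alpha ^+ 2 / 2.
    by rewrite ltr_pdivrMr //; move: h4; rewrite ltr_pdivlMr // mulrC.
  have e20' : 0 < e ^+ 2 by exact: exprn_gt0.
  have : 0 < e ^+ 2 * (alpha ^+ 2 - K * e `^ (q - 2) / B) - e ^+ 2 * (Cp * e `^ db + Cp / B * e `^ (q - 2 + delta_v)).
    by rewrite -mulrBr mulr_gt0 // subr_gt0; lra.
  move=> h6; lra.
Unshelve. all: end_near.
Qed.
Lemma F_der (R : realType) (Rm : R -> R -> R) (P s B y : R) :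
  derivable (fun x => Rm x B) (y * s) 1 -> derivable (fun y : R => P * Rm (y * s) B) y 1.
Proof.
move=> dR.
have d1 : derivable (fun y : R => y * s) y 1.
  have h := derivableM (@derivable_id R R^o y 1) (@derivable_cst R R^o R^o s y 1).
  exact: h.
have d2 : derivable ((fun x => Rm x B) \o (fun y : R => y * s)) y 1.
  apply/derivable1_diffP; apply: differentiable_comp; exact/derivable1_diffP.
exact: derivableM (derivable_cst P y 1) d2.
Qed.

Lemma G_der (R : realType) (F : R -> R) (a2 K q y : R) : 0 < y ->
  derivable F y 1 ->
  derivable (fun y : R => a2 * y ^+ 2 - K * y `^ q + F y) y 1 /\
  ((fun y : R => a2 * y ^+ 2 - K * y `^ q + F y)^`())%classic y = a2 * (2 * y) - K * (q * y `^ (q - 1)) + (F^`())%classic y.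
Proof.
move=> y0 dF.
have hF : is_derive y 1 F ((F^`())%classic y) by rewrite derive1E; exact: derivableP.
have hp : is_derive y 1 (@powR R ^~ q) (q * y `^ (q - 1)) by exact: is_derive1_powR.
have hG : is_derive y 1 (a2 \*: (id ^+ 2) - K \*: (@powR R ^~ q) + F)
   (a2 *: ((2%:R * id y ^+ 1) *: 1) - K *: (q * y `^ (q - 1)) + (F^`())%classic y).
  exact: is_deriveD.
have eG : (a2 \*: (id ^+ 2) - K \*: (@powR R ^~ q) + F) = (fun y => a2 * y ^+ 2 - K * y `^ q + F y).
  by apply/funext => z /=.
rewrite -eG; split; first by case: hG.
rewrite derive1E derive_val /= expr1 /GRing.scale /= mulr1 /=; ring.
Qed.

Lemma G_id (R : realType) (D Rm : R -> R -> R) (a2 K q B y : R) :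
  (forall e B, Rm e B = D e B - (a2 * e ^+ 2 - K * e `^ q / B)) -> q < 2 -> 0 < B -> 0 <= y ->
  a2 * y ^+ 2 - K * y `^ q + B `^ (2 / (2 - q)) * Rm (y * B `^ (- (2 - q)^-1)) B
  = B `^ (2 / (2 - q)) * D (y * B `^ (- (2 - q)^-1)) B.
Proof.
move=> hRm q2 B0 y0; rewrite hRm.
have p0 : 2 - q != 0 by rewrite subr_eq0 gt_eqF.
set s := B `^ (- (2 - q)^-1); set P := B `^ (2 / (2 - q)).
have s0 : 0 <= s by exact: powR_ge0.
have h1 : P * s ^+ 2 = 1.
  rewrite /P /s -(powR_mulrn 2 (powR_ge0 _ _)) -powRrM -powRD; last by rewrite (gt_eqF B0) implybT.
  have -> : 2 / (2 - q) + - (2 - q)^-1 * 2%:R = 0 by rewrite mulNr mulrC addrN.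
  exact: powRr0.
have h2 : P * s `^ q = B.
  rewrite /P /s -powRrM -powRD; last by rewrite (gt_eqF B0) implybT.
  have -> : 2 / (2 - q) + - (2 - q)^-1 * q = 1 by field.
  by rewrite powRr1 // ltW.
rewrite exprMn powRM //.
have -> : P * (D (y * s) B - (a2 * (y ^+ 2 * s ^+ 2) - K * (y `^ q * s `^ q) / B))
  = P * D (y * s) B - a2 * y ^+ 2 * (P * s ^+ 2) + K * y `^ q * (P * s `^ q) / B by ring.
by rewrite h1 h2; field; rewrite (gt_eqF B0).
Qed.

Lemma g_form (R : realType) (a2 K q y : R) : 0 < y ->
  a2 * y ^+ 2 - K * y `^ q = y `^ q * (a2 * y `^ (2 - q) - K).
Proof.
move=> y0; have -> : y ^+ 2 = y `^ q * y `^ (2 - q).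
  rewrite -powRD; last by rewrite (gt_eqF y0) implybT.
  by rewrite addrC subrK powR_mulrn // ltW.
ring.
Qed.

Lemma powR_le (R : realType) (r x y : R) : 0 <= r -> 0 <= x -> x <= y -> x `^ r <= y `^ r.
Proof.
move=> r0 x0 xy; apply: (ge0_ler_powR r0) => //; rewrite nnegrE //; exact: le_trans xy.
Qed.

Lemma powR_lt (R : realType) (r x y : R) : 0 < r -> 0 <= x -> x < y -> x `^ r < y `^ r.
Proof.
move=> r0 x0 xy; apply: (gt0_ltr_powR r0) => //; rewrite nnegrE //; exact: le_trans (ltW xy).
Qed.

Lemma powR_inv_cancel (R : realType) (r t : R) : 0 < r -> 0 <= t -> (t `^ r^-1) `^ r = t.
Proof.
move=> r0 t0; rewrite -powRrM mulVf ?gt_eqF // powRr1 //.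
Qed.

Lemma sign_lemma (R : realType) (Rm : R -> R -> R) (a2 K q m M C δ : R) :
  0 < a2 -> 0 < K -> 0 <= q -> q < 2 -> 0 < m -> m < C -> C < M ->
  C `^ (2 - q) = K / a2 -> 0 < δ -> δ < C ->
  (forall m M : R, 0 < m -> m <= M -> forall eta : R, 0 < eta ->
        \forall B \near +oo, forall x, m <= x <= M ->
          let F := fun y => B `^ (2 / (2 - q)) * Rm (y * B `^ (- (2 - q)^-1)) B in
          `|F x| < eta /\ `|F^`()%classic x| < eta) ->
  \forall B \near +oo,
    (forall y, m <= y <= C - δ ->
      a2 * y ^+ 2 - K * y `^ q + B `^ (2 / (2 - q)) * Rm (y * B `^ (- (2 - q)^-1)) B < 0) /\
    (forall y, C + δ <= y <= M ->
      0 < a2 * y ^+ 2 - K * y `^ q + B `^ (2 / (2 - q)) * Rm (y * B `^ (- (2 - q)^-1)) B).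
Proof.
move=> a20 K0 q0 q2 m0 mC CM Cp d0 dC hF.
have p0 : 0 < 2 - q by rewrite subr_gt0.
have C0 : 0 < C by exact: lt_trans mC.
set gl := m `^ q * (K - a2 * (C - δ) `^ (2 - q)).
set gr := m `^ q * (a2 * (C + δ) `^ (2 - q) - K).
have mq0 : 0 < m `^ q by exact: powR_gt0.
have hl : a2 * (C - δ) `^ (2 - q) < K.
  rewrite mulrC -ltr_pdivlMr // -Cp; apply: powR_lt => //; rewrite ?subr_ge0 ?ltW //.
  by rewrite ltrBlDr ltrDl.
have hr : K < a2 * (C + δ) `^ (2 - q).
  rewrite mulrC -ltr_pdivrMr // -Cp; apply: powR_lt; rewrite ?ltW //.
  by rewrite ltrDl.
have gl0 : 0 < gl by rewrite mulr_gt0 // subr_gt0.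
have gr0 : 0 < gr by rewrite mulr_gt0 // subr_gt0.
have mg0 : 0 < Num.min gl gr by rewrite lt_min gl0 gr0.
have := hF m M m0 (ltW (lt_trans mC CM)) (Num.min gl gr) mg0.
apply: filterS => B HB; split.
- move=> y /andP[my yC].
  have y0 : 0 < y by exact: lt_le_trans my.
  have yM : m <= y <= M.
    by rewrite my /=; apply: le_trans yC _; apply: ltW; apply: lt_trans CM; rewrite ltrBlDr ltrDl.
  have [h1 _] := HB y yM.
  move: h1; set f := (X in `|X| < _) => h1.
  have hf : f < gl by apply: le_lt_trans (ler_norm f) _; apply: lt_le_trans h1 _; by rewrite ge_min lexx.
  rewrite g_form //.
  have u1 : m `^ q <= y `^ q by apply: powR_le => //; exact: ltW.
  have w1 : a2 * y `^ (2 - q) - K <= a2 * (C - δ) `^ (2 - q) - K.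
    rewrite lerD2r; apply: ler_wpM2l; first exact: ltW.
    apply: powR_le; [exact: ltW p0|exact: ltW y0|exact: yC].
  have : y `^ q * (a2 * y `^ (2 - q) - K) <= m `^ q * (a2 * (C - δ) `^ (2 - q) - K).
    apply: le_trans (_ : m `^ q * (a2 * y `^ (2 - q) - K) <= _).
      rewrite -subr_ge0 -mulrBl; apply: mulr_le0; first by rewrite subr_le0.
      by apply: le_trans w1 _; rewrite subr_le0 ltW.
    by apply: ler_wpM2l => //; exact: ltW.
  rewrite /gl in hf => hh; change (y `^ q * (a2 * y `^ (2 - q) - K) + f < 0); lra.
- move=> y /andP[Cy yM].
  have y0 : 0 < y by apply: lt_le_trans Cy; exact: ltr_wpDr (ltW d0) C0.
  have yM' : m <= y <= M.
    by rewrite yM andbT; apply: le_trans Cy; apply: ltW; apply: lt_trans mC _; rewrite ltrDl.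
  have [h1 _] := HB y yM'.
  move: h1; set f := (X in `|X| < _) => h1.
  have hf : - gr < f.
    have h1' : `|f| < gr by apply: lt_le_trans h1 _; rewrite ge_min lexx orbT.
    by move: h1'; rewrite ltr_norml => /andP[].
  rewrite g_form //.
  have u1 : m `^ q <= y `^ q by apply: powR_le => //; [exact: ltW | by case/andP: yM'].
  have w1 : a2 * (C + δ) `^ (2 - q) - K <= a2 * y `^ (2 - q) - K.
    rewrite lerD2r; apply: ler_wpM2l; first exact: ltW.
    apply: powR_le; [exact: ltW p0|exact: ltW (ltr_wpDr (ltW d0) C0)|exact: Cy].
  have : m `^ q * (a2 * (C + δ) `^ (2 - q) - K) <= y `^ q * (a2 * y `^ (2 - q) - K).
    apply: ler_pM => //; [exact: ltW | by rewrite subr_ge0 ltW].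
  rewrite /gr in hf => hh; change (0 < y `^ q * (a2 * y `^ (2 - q) - K) + f); lra.
Qed.

Lemma gprime_lb (R : realType) (a2 K q L0 U0 y : R) : 0 < a2 -> 0 < K -> 0 <= q -> q < 2 ->
  0 < L0 -> K * (2 + q) / (4 * a2) <= L0 `^ (2 - q) -> L0 <= y <= U0 ->
  L0 `^ q * (K * (2 - q) / 2) / U0 <= a2 * (2 * y) - K * (q * y `^ (q - 1)).
Proof.
move=> a20 K0 q0 q2 L00 hL /andP[Ly yU].
have p0 : 0 < 2 - q by rewrite subr_gt0.
have y0 : 0 < y by exact: lt_le_trans Ly.
have U00 : 0 < U0 by exact: lt_le_trans yU.
have hy2 : y ^+ 2 = y `^ q * y `^ (2 - q).
  rewrite -powRD; last by rewrite (gt_eqF y0) implybT.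
  by rewrite addrC subrK powR_mulrn // ltW.
rewrite powRB; last by rewrite (gt_eqF y0) implybT.
rewrite powRr1 ?(ltW y0) //.
have -> : a2 * (2 * y) - K * (q * (y `^ q / y)) = (a2 * 2 * y ^+ 2 - K * q * y `^ q) / y.
  by field; rewrite gt_eqF.
rewrite hy2.
have -> : a2 * 2 * (y `^ q * y `^ (2 - q)) - K * q * y `^ q = y `^ q * (2 * a2 * y `^ (2 - q) - K * q) by ring.
have u0 : 0 < L0 `^ q by exact: powR_gt0.
have u1 : L0 `^ q <= y `^ q by apply: powR_le => //; exact: ltW.
have w1 : K * (2 - q) / 2 <= 2 * a2 * y `^ (2 - q) - K * q.
  have : L0 `^ (2 - q) <= y `^ (2 - q) by apply: powR_le => //; exact: ltW.
  move=> h; have : K * (2 + q) / (4 * a2) <= y `^ (2 - q) by exact: le_trans h.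
  rewrite ler_pdivrMr ?mulr_gt0 // => h2; lra.
have w0 : 0 < K * (2 - q) / 2 by rewrite divr_gt0 ?mulr_gt0.
apply: le_trans (_ : y `^ q * (2 * a2 * y `^ (2 - q) - K * q) / U0 <= _).
  apply: ler_wpM2r; first by rewrite invr_ge0 ltW.
  apply: ler_pM => //; exact: ltW.
apply: ler_wpM2l; first by apply: mulr_ge0; [exact: powR_ge0 | exact: le_trans (ltW w0) w1].
by rewrite lef_pV2.
Qed.

Ltac clear_eqs := repeat match goal with H : @eq _ _ _ |- _ => clear H end.
Ltac lra_c := clear_eqs; lra.

Lemma part_q1 (R : realType) (D Rm : R -> R -> R) (a2 K q : R) :
  0 < a2 -> 0 < K -> 0 <= q -> q < 2 ->
  (forall e B, Rm e B = D e B - (a2 * e ^+ 2 - K * e `^ q / B)) ->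
  (forall B e, 0 < B -> 0 < e -> derivable (fun x => Rm x B) e 1) ->
  (forall m M : R, 0 < m -> m <= M -> forall eta : R, 0 < eta ->
        \forall B \near +oo, forall x, m <= x <= M ->
          let F := fun y => B `^ (2 / (2 - q)) * Rm (y * B `^ (- (2 - q)^-1)) B in
          `|F x| < eta /\ `|F^`()%classic x| < eta) ->
  let C := (K / a2) `^ (2 - q)^-1 in
  forall m M : R, 0 < m -> m < C -> C < M ->
  exists eps_star : R -> R,
   (\forall B \near +oo, is_lower_crossing D q m M B (eps_star B))
   /\ (eps_star B / (C * B `^ (- (2 - q)^-1))) @[B --> +oo] --> (1 : R).
Proof.
move=> a20 K0 q0 q2 hRm dRm hF C m M m0 mC CM.
have p0 : 0 < 2 - q by rewrite subr_gt0.
have C0 : 0 < C by exact: lt_trans mC.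
have Cp : C `^ (2 - q) = K / a2 by rewrite powR_inv_cancel // ltW // divr_gt0.
pose S := fun B : R => B `^ (- (2 - q)^-1).
pose P := fun B : R => B `^ (2 / (2 - q)).
pose F := fun B y => P B * Rm (y * S B) B.
pose G := fun B y => a2 * y ^+ 2 - K * y `^ q + F B y.
have S0 : forall B, 0 < B -> 0 < S B by move=> B B0; exact: powR_gt0.
have P0 : forall B, 0 < B -> 0 < P B by move=> B B0; exact: powR_gt0.
have Gid : forall B y, 0 < B -> 0 <= y -> G B y = P B * D (y * S B) B.
  by move=> B y B0 y0; exact: G_id.
have HS : forall δ, 0 < δ -> δ < C -> \forall B \near +oo,
    (forall y, m <= y <= C - δ -> G B y < 0) /\ (forall y, C + δ <= y <= M -> 0 < G B y).
  move=> δ d0 dC; have := (@sign_lemma R Rm a2 K q m M C δ a20 K0 q0 q2 m0 mC CM Cp d0 dC hF).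
  by apply: filterS => B [h1 h2]; split => y hy; [exact: h1 | exact: h2].
(* the monotonicity window *)
have Ln0 : 0 <= K * (2 + q) / (4 * a2).
  apply: divr_ge0; first by apply: mulr_ge0; [exact: ltW | exact: addr_ge0 (ler0n _ 2) q0].
  exact: mulr_ge0 (ler0n _ 4) (ltW a20).
pose L := (K * (2 + q) / (4 * a2)) `^ (2 - q)^-1.
have Lp : L `^ (2 - q) = K * (2 + q) / (4 * a2) by rewrite powR_inv_cancel.
have LC : L < C.
  apply: powR_lt => //; first by rewrite invr_gt0.
  have -> : K * (2 + q) / (4 * a2) = (K / a2) * ((2 + q) / 4) by field; rewrite gt_eqF.
  rewrite gtr_pMr ?divr_gt0 //.
  rewrite ltr_pdivrMr //; lra_c.
have L0 : 0 <= L by exact: powR_ge0.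
pose δ0 := Num.min (C - L) (Num.min (C - m) (M - C)) / 2.
have d00 : 0 < δ0.
  by rewrite divr_gt0 // !lt_min !subr_gt0 LC mC CM.
have d0L : δ0 < C - L.
  have : Num.min (C - L) (Num.min (C - m) (M - C)) <= C - L by rewrite ge_min lexx.
  rewrite /δ0; lra_c.
have d0m : δ0 < C - m.
  have : Num.min (C - L) (Num.min (C - m) (M - C)) <= C - m by rewrite !ge_min lexx orbT.
  rewrite /δ0; lra_c.
have d0M : δ0 < M - C.
  have : Num.min (C - L) (Num.min (C - m) (M - C)) <= M - C by rewrite !ge_min lexx !orbT.
  rewrite /δ0; lra_c.
have d0C : δ0 < C by lra_c.
pose L0' := C - δ0. pose U0 := C + δ0.
have L0'0 : 0 < L0' by rewrite /L0'; lra_c.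
have L0'U0 : L0' <= U0 by rewrite /L0' /U0; lra_c.
have hL0 : K * (2 + q) / (4 * a2) <= L0' `^ (2 - q).
  by rewrite -Lp; apply: powR_le => //; rewrite ?ltW // /L0'; lra_c.
pose γ := L0' `^ q * (K * (2 - q) / 2) / U0.
have γ0 : 0 < γ.
  by rewrite /γ divr_gt0 ?mulr_gt0 ?powR_gt0 ?divr_gt0 ?mulr_gt0 // /U0; lra_c.
have Hg' : forall y, L0' <= y <= U0 -> γ <= a2 * (2 * y) - K * (q * y `^ (q - 1)).
  by move=> y hy; exact: gprime_lb.
have HD := hF L0' U0 L0'0 L0'U0 γ γ0.
have HS0 := HS δ0 d00 d0C.
have Hex : \forall B \near +oo, exists e, is_lower_crossing D q m M B e.
  near=> B.
  have B0 : 0 < B by near: B; apply: nbhs_pinfty_gt; rewrite num_real.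
  have [Hneg Hpos] : (forall y, m <= y <= C - δ0 -> G B y < 0) /\
      (forall y, C + δ0 <= y <= M -> 0 < G B y) by near: B; exact: HS0.
  have Hd : forall y, L0' <= y <= U0 -> `|(F B)^`()%classic y| < γ.
    have HDB : forall x, L0' <= x <= U0 -> `|F B x| < γ /\ `|(F B)^`()%classic x| < γ.
      by near: B; exact: HD.
    by move=> y hy; case: (HDB y hy).
  have dG : forall y, 0 < y -> derivable (G B) y 1 /\
      (G B)^`()%classic y = a2 * (2 * y) - K * (q * y `^ (q - 1)) + (F B)^`()%classic y.
    move=> y y0; apply: G_der => //.
    apply: F_der; apply: dRm => //; exact: mulr_gt0 y0 (S0 B B0).
  have Gc : {within `[L0', U0], continuous (G B)}.
    apply: derivable_within_continuous => y; rewrite in_itv /= => /andP[hy _].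
    by case: (dG y (lt_le_trans L0'0 hy)).
  have Ginc : {in `[L0', U0]%R &, {homo G B : x y / x < y}}.
    have dfI : forall y, y \in `]L0', U0[%R -> derivable (G B) y 1.
      move=> y; rewrite in_itv /= => /andP[hy1 hy2].
      by case: (dG y (lt_trans L0'0 hy1)).
    apply: (@gtr0_derive1_lt_cc R (G B) L0' U0 dfI) => // y; rewrite in_itv /= => /andP[hy1 hy2].
    have hy : L0' <= y <= U0 by rewrite !ltW.
    case: (dG y (lt_trans L0'0 hy1)) => _ ->.
    have := Hg' y hy; have := Hd y hy; rewrite ltr_norml => /andP[h1 _] h2.
    lra_c.
  have GL : G B L0' < 0 by apply: Hneg; rewrite lexx andbT /L0'; lra_c.
  have GU : 0 < G B U0 by apply: Hpos; rewrite lexx /U0; lra_c.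
  have [xs xsI Gxs] : exists2 c, c \in `[L0', U0]%R & G B c = 0.
    apply: IVT => //.
    by rewrite ge_min ltW //= le_max (ltW GU) orbT.
  move: xsI; rewrite in_itv /= => /andP[xs1 xs2].
  have xs0 : 0 < xs by exact: lt_le_trans L0'0 xs1.
  have SB := S0 B B0; have PB := P0 B B0.
  exists (xs * S B); rewrite /is_lower_crossing /=; split.
  - rewrite !ler_pM2r //; apply/andP; split; rewrite /L0' /U0 in xs1 xs2; lra_c.
  - have := Gid B xs B0 (ltW xs0); rewrite Gxs => /esym/eqP.
    by rewrite mulf_eq0 (gt_eqF PB) /= => /eqP.
  - move=> x /andP[hx1 hx2].
    have ex : x = (x / S B) * S B by rewrite divfK // gt_eqF.
    have hy1 : m <= x / S B by rewrite ler_pdivlMr.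
    have hy2 : x / S B < xs by rewrite ltr_pdivrMr.
    have y0 : 0 < x / S B by exact: lt_le_trans m0 hy1.
    have : G B (x / S B) < 0.
      case: (lerP (x / S B) (C - δ0)) => h.
        by apply: Hneg; rewrite hy1 h.
      rewrite -Gxs; apply: Ginc => //; rewrite in_itv /=.
        by rewrite ltW //= (le_trans (ltW hy2)).
      by rewrite xs1 xs2.
    by rewrite Gid ?ltW // -ex pmulr_rlt0.
  - move=> x /andP[hx1 hx2].
    have ex : x = (x / S B) * S B by rewrite divfK // gt_eqF.
    have hy1 : x / S B <= M by rewrite ler_pdivrMr.
    have hy2 : xs < x / S B by rewrite ltr_pdivlMr.
    have y0 : 0 < x / S B by exact: lt_trans xs0 hy2.
    have : 0 < G B (x / S B).
      case: (lerP (C + δ0) (x / S B)) => h.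
        by apply: Hpos; rewrite hy1 h.
      rewrite -Gxs; apply: Ginc => //; rewrite in_itv /=.
        by rewrite xs1 xs2.
      by rewrite (le_trans xs1 (ltW hy2)) /= ltW.
    by rewrite Gid ?ltW // -ex pmulr_rgt0.
pose es := fun B => xget 0 (fun e => is_lower_crossing D q m M B e).
have Hes : \forall B \near +oo, is_lower_crossing D q m M B (es B).
  by apply: filterS Hex => B; exact: xgetPex.
exists es; split => //.
apply/cvgrPdist_lt => ε ε0.
pose δ := Num.min (ε * C / 2) δ0.
have δ0' : 0 < δ by rewrite lt_min d00 andbT divr_gt0 ?mulr_gt0.
have δC : δ < C by apply: le_lt_trans d0C; rewrite ge_min lexx orbT.
have δε : δ <= ε * C / 2 by rewrite ge_min lexx.
have HSd := HS δ δ0' δC.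
near=> B.
have B0 : 0 < B by near: B; apply: nbhs_pinfty_gt; rewrite num_real.
have [Hneg Hpos] : (forall y, m <= y <= C - δ -> G B y < 0) /\
    (forall y, C + δ <= y <= M -> 0 < G B y) by near: B; exact: HSd.
have [hI hz _ _] : is_lower_crossing D q m M B (es B) by near: B; exact: Hes.
have SB := S0 B B0; have PB := P0 B B0.
move: hI hz; set e := es B => hI hz.
pose x := e / S B.
have ex : e = x * S B by rewrite /x divfK // gt_eqF.
have [hx1 hx2] : m <= x /\ x <= M.
  by move: hI => /andP[h1 h2]; split; [rewrite /x ler_pdivlMr | rewrite /x ler_pdivrMr].
have x0 : 0 < x by exact: lt_le_trans m0 hx1.
have Gx : G B x = 0 by rewrite Gid ?ltW // -ex hz mulr0.
have xl : C - δ < x.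
  rewrite ltNge; apply/negP => h.
  by have := Hneg x; rewrite hx1 h Gx ltxx => /(_ isT).
have xr : x < C + δ.
  rewrite ltNge; apply/negP => h.
  by have := Hpos x; rewrite hx2 h Gx ltxx => /(_ isT).
have -> : e / (C * S B) = x / C by rewrite /x; field; rewrite !gt_eqF.
have -> : 1 - x / C = (C - x) / C by field; rewrite gt_eqF.
rewrite normrM normfV (gtr0_norm C0) ltr_pdivrMr //.
have : `|C - x| < δ by rewrite ltr_norml; apply/andP; split; lra_c.
have : ε * C / 2 < ε * C by rewrite ltr_pdivrMr // ltr_pMr ?mulr_gt0 // ltr1n.
lra_c.
Unshelve. all: end_near.
Qed.

Theorem corollary8 (R : realType) (k : nat) (lam c pi : nat -> R)
  (mu v : R -> R) (mu0 alpha nu q delta_v : R) :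
  is_richardson_rule k lam c pi ->
  (* bounded observable: bounded means, nonnegative variances *)
  (exists b : R, `|mu0| <= b /\ forall e, 0 <= e -> `|mu e| <= b /\ 0 <= v e) ->
  (* (A1(k)) *)
  alpha != 0 ->
  (exists a : nat -> R, a 1%N = alpha /\
     exists (C e0 : R), 0 < e0 /\
       forall j, (j <= k)%N -> forall e, 0 < e < e0 ->
         `|mu (lam j * e) - mu0
            - \sum_(1 <= m < k.+1) a m * lam j ^+ m * e ^+ m| <= C * e ^+ k.+1) ->
  (* (A4) *)
  0 < nu -> 0 <= q -> 0 < delta_v ->
  (exists (C e0 : R), 0 < e0 /\
     forall j, (j <= k)%N -> forall e, 0 < e < e0 ->
       `|v (lam j * e) - nu * (lam j * e) `^ q|
         <= C * (lam j * e) `^ (q + delta_v)) ->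
  (* (A5): remainder bound *)
  (exists delta_b : R, 0 < delta_b /\
     exists (C e0 : R), 0 < e0 /\
       forall e B, 0 < e < e0 -> 0 < B ->
         `|delta_remainder k lam c pi mu v mu0 alpha nu q e B|
           <= C * (e `^ (2 + delta_b) + e `^ (q + delta_v) / B)) ->
  (* (A5): differentiable remainder, rescaled version and its derivative
     tend to 0 uniformly on compact subsets of (0, oo), when q < 2 *)
  (q < 2 ->
     (forall B e, 0 < B -> 0 < e ->
        derivable (fun x => delta_remainder k lam c pi mu v mu0 alpha nu q x B) e 1)
     /\
     (forall m M : R, 0 < m -> m <= M -> forall eta : R, 0 < eta ->
        \forall B \near +oo, forall x, m <= x <= M ->
          let F := fun y => B `^ (2 / (2 - q)) *
             delta_remainder k lam c pi mu v mu0 alpha nu q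
               (y * B `^ (- (2 - q)^-1)) B in
          `|F x| < eta /\ `|F^`() x| < eta)) ->
  let K := K_qk k lam c pi nu q in
  let D := delta_mse k lam c pi mu v mu0 in
  0 < K
  /\
  (q < 2 ->
     let C := (K / alpha ^+ 2) `^ (2 - q)^-1 in
     forall m M : R, 0 < m -> m < C -> C < M ->
       exists eps_star : R -> R,
         (\forall B \near +oo, is_lower_crossing D q m M B (eps_star B))
         /\ (eps_star B / (C * B `^ (- (2 - q)^-1))) @[B --> +oo] --> (1 : R))
  /\
  (q = 2 ->
     let Bstar := K / alpha ^+ 2 in
     forall B, 0 < B ->
       (Bstar < B -> exists e0, 0 < e0 /\ forall e, 0 < e < e0 -> 0 < D e B)
       /\
       (B < Bstar -> exists e0, 0 < e0 /\ forall e, 0 < e < e0 -> D e B < 0))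
  /\
  (2 < q ->
     \forall B \near +oo, exists e0, 0 < e0 /\ forall e, 0 < e < e0 -> 0 < D e B).
Proof.
move=> hRR hb ha0 hA1 nu0 q0 dv0 hA4 hA5 hq1 K D.
have K0 : 0 < K by exact: K_pos.
have a20 : 0 < alpha ^+ 2 by rewrite exprn_even_gt0.
have H2 := @part_q2 R k lam c pi mu v mu0 alpha nu q delta_v dv0 ha0 K0 hA5.
case: H2 => H2a H2b.
split; first exact: K0.
split; last by split; [exact: H2a | exact: H2b].
move=> q2 C m M m0 mC CM.
have [hd hu] := hq1 q2.
have hRm : forall e B, delta_remainder k lam c pi mu v mu0 alpha nu q e B
   = D e B - (alpha ^+ 2 * e ^+ 2 - K * e `^ q / B) by [].
exact: (@part_q1 R D (fun e B => delta_remainder k lam c pi mu v mu0 alpha nu q e B)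
   (alpha ^+ 2) K q a20 K0 q0 q2 hRm hd hu m M m0 mC CM).
Qed.
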